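(* Consider the simplified model in the context (common Rician factor $\kappa$, intercell factor $\alpha$, orthogonal LoS components with $\frac1N\bar{\mathbf H}_{jj}^H\bar{\mathbf H}_{jj}=\frac{\kappa}{1+\kappa}\mathbf I_K$ for all $j$) under the asymptotic regime of the context. Then the deterministic approximations $\bar\gamma^{\rm MRC}_{jk}$ and $\bar\gamma^{\rm MRT}_{jk}$ both reduce to $$\frac{1}{\frac{1}{\nu N\rho}\frac{1+\kappa}{\tau}+\frac{K}{N\nu}\Big(\bar L\frac{1+\kappa}{\tau}+\frac1{\tau^2}\frac{\kappa}{1+\kappa}\Big)+\frac{\alpha}{\tau^2}\Big(\bar L-\frac1{1+\kappa}\Big)}=\frac{1}{\frac{\bar L}{N\rho}\frac{1+\kappa}{\tau}+\frac1{\rho^{\rm tr}}A+\frac KN\bar LB+\frac{\alpha}{\tau^2}\Big(\bar L-\frac1{1+\kappa}\Big)},$$ where $\rho=\rho^{\rm dl}$ for MRT and $\rho=\rho^{\rm ul}$ for MRC, $\nu=\frac{\rho^{\rm tr}}{1+\rho^{\rm tr}\bar L}$, $\bar L=\alpha(L-1)+\frac1{1+\kappa}$, $\tau=\frac1{1+\kappa}+\frac{\kappa}{\nu}$, $A=\big(\frac KN\bar L+\frac1{N\rho}\big)\frac{1+\kappa}{\tau}+\frac KN\frac1{\tau^2}\frac{\kappa}{1+\kappa}$ and $B=\bar L\frac{1+\kappa}{\tau}+\frac1{\tau^2}\frac{\kappa}{1+\kappa}$.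
   Context: Simplified model: $L$ cells, each BS with $N$ antennas and $K$ single-antenna UEs; channel from UE $k$ in cell $l$ to BS $j$: $\mathbf h_{jjk}=\sqrt{\frac1{1+\kappa}}\mathbf z_{jjk}+\sqrt{\frac{\kappa}{1+\kappa}}\mathbf a_{jjk}$, $\mathbf h_{jlk}=\sqrt\alpha\,\mathbf z_{jlk}$ ($l\ne j$), with independent $\mathbf z_{jlk}\sim\mathcal{CN}(\mathbf 0,\mathbf I_N)$, intercell factor $\alpha\in(0,1]$, Rician factor $\kappa\ge0$, deterministic $\mathbf a_{jjk}\in\mathbb C^N$. Thus $d_{jjk}=\frac1{1+\kappa}$, $d_{jlk}=\alpha$ ($l\ne j$), LoS vectors $\bar{\mathbf h}_{jjk}=\sqrt{\frac{\kappa}{1+\kappa}}\mathbf a_{jjk}$, $\bar{\mathbf H}_{jj}=[\bar{\mathbf h}_{jj1},\dots,\bar{\mathbf h}_{jjK}]$. With training SNR $\rho^{\rm tr}>0$, $\phi_{jlk}=\frac{d_{jjk}d_{jlk}}{1/\rho^{\rm tr}+\sum_nd_{jnk}}$ (so $\phi_{jjk}=\frac{\nu}{(1+\kappa)^2}$, $\phi_{jlk}=\frac{\alpha\nu}{1+\kappa}$ for $l\ne j$). Let $\bar\theta_l=(\frac1K\sum_k(\phi_{llk}+\frac1N\bar{\mathbf h}_{llk}^H\bar{\mathbf h}_{llk}))^{-1}$. Deterministic approximations: $\bar\gamma^{\rm MRT}_{jk}=\frac{\bar\theta_j(\phi_{jjk}+\frac1N\bar{\mathbf h}_{jjk}^H\bar{\mathbf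 h}_{jjk})^2}{\frac1{N\rho^{\rm dl}}+s^{\rm MRT}_{jk}+\bar\theta_j\sum_{i\ne k}|\frac1N\bar{\mathbf h}_{jji}^H\bar{\mathbf h}_{jjk}|^2+\sum_{l\ne j}\bar\theta_l\phi_{ljk}^2}$, $s^{\rm MRT}_{jk}=\frac1N\sum_l\sum_i\bar\theta_ld_{ljk}(\phi_{lli}+\frac1N\bar{\mathbf h}_{lli}^H\bar{\mathbf h}_{lli})+\frac1N\sum_{i\ne k}\bar\theta_j\phi_{jji}\frac1N\bar{\mathbf h}_{jjk}^H\bar{\mathbf h}_{jjk}$; $\bar\gamma^{\rm MRC}_{jk}=\frac{(\phi_{jjk}+\frac1N\bar{\mathbf h}_{jjk}^H\bar{\mathbf h}_{jjk})^2}{\frac1{N\rho^{\rm ul}\bar\theta_j}+s^{\rm MRC}_{jk}+\sum_{i\ne k}|\frac1N\bar{\mathbf h}_{jjk}^H\bar{\mathbf h}_{jji}|^2+\sum_{l\ne j}\phi_{jlk}^2}$, $s^{\rm MRC}_{jk}=\frac1N\sum_l\sum_id_{jli}(\phi_{jjk}+\frac1N\bar{\mathbf h}_{jjk}^H\bar{\mathbf h}_{jjk})+\frac1N\sum_{i\ne k}\phi_{jjk}\frac1N\bar{\mathbf h}_{jji}^H\bar{\mathbf h}_{jji}$. Asymptotic regime: $N,K\to\infty$ with $1\le\liminf N/K\le\limsup N/K<\infty$; large-scale coefficients bounded away from $0$ and $\infty$; $\limsup_N\|\bar{\mathbf H}_{jj}\|<\infty$ (spectral norm). *)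

(* Defs.v *)
From HB Require Import structures.
From mathcomp Require Import all_boot all_order all_algebra.
From mathcomp Require Import complex.
From mathcomp Require Import all_classical all_reals all_analysis.
Set Implicit Arguments. Unset Strict Implicit. Unset Printing Implicit Defensive.
Import Order.TTheory GRing.Theory Num.Theory.
Local Open Scope ring_scope.
Local Open Scope complex_scope.

Section Model.
Variable R : realType.

Definition sqmod (z : R[i]) : R := complex.Re z ^+ 2 + complex.Im z ^+ 2.

Definition ninner (N : nat) (u v : 'cV[R[i]]_N) : R[i] :=
  (\sum_(n < N) (conjc (u n 0)) * v n 0) / (N%:R)%:C.

Definition nnorm2 (N : nat) (u : 'cV[R[i]]_N) : R := complex.Re (ninner u u).

(* Simplified model with L cells (indices 'I_L), K UEs per cell, N antennas.
   a j k = a_{jjk} is the deterministic LoS vector of UE k of cell j at BS j. *)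
Variables (L N K : nat) (alpha kappa rho_tr : R).
Variable a : 'I_L -> 'I_K -> 'cV[R[i]]_N.

Definition hbar (j : 'I_L) (k : 'I_K) : 'cV[R[i]]_N :=
  (Num.sqrt (kappa / (1 + kappa)))%:C *: a j k.

(* large-scale coefficients d_{jlk} (channel from UE k in cell l to BS j) *)
Definition dcoef (j l : 'I_L) (k : 'I_K) : R :=
  if j == l then 1 / (1 + kappa) else alpha.

Definition phi (j l : 'I_L) (k : 'I_K) : R :=
  dcoef j j k * dcoef j l k / (1 / rho_tr + \sum_(n < L) dcoef j n k).

Definition thetabar (l : 'I_L) : R :=
  ((\sum_(k < K) (phi l l k + nnorm2 (hbar l k))) / K%:R)^-1.

Definition s_MRT (j : 'I_L) (k : 'I_K) : R :=
  (\sum_(l < L) \sum_(i < K)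
      thetabar l * dcoef l j k * (phi l l i + nnorm2 (hbar l i))) / N%:R
  + (\sum_(i < K | i != k) thetabar j * phi j j i * nnorm2 (hbar j k)) / N%:R.

Definition gamma_MRT (rho_dl : R) (j : 'I_L) (k : 'I_K) : R :=
  thetabar j * (phi j j k + nnorm2 (hbar j k)) ^+ 2 /
  (1 / (N%:R * rho_dl) + s_MRT j k
   + thetabar j * (\sum_(i < K | i != k) sqmod (ninner (hbar j i) (hbar j k)))
   + \sum_(l < L | l != j) thetabar l * phi l j k ^+ 2).

Definition s_MRC (j : 'I_L) (k : 'I_K) : R :=
  (\sum_(l < L) \sum_(i < K)
      dcoef j l i * (phi j j k + nnorm2 (hbar j k))) / N%:R
  + (\sum_(i < K | i != k) phi j j k * nnorm2 (hbar j i)) / N%:R.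

Definition gamma_MRC (rho_ul : R) (j : 'I_L) (k : 'I_K) : R :=
  (phi j j k + nnorm2 (hbar j k)) ^+ 2 /
  (1 / (N%:R * rho_ul * thetabar j) + s_MRC j k
   + (\sum_(i < K | i != k) sqmod (ninner (hbar j k) (hbar j i)))
   + \sum_(l < L | l != j) phi j l k ^+ 2).

End Model.

Section Closed.
Variable R : realType.
Variables (L N K : nat) (alpha kappa rho_tr rho : R).

Definition Lbar : R := alpha * (L%:R - 1) + 1 / (1 + kappa).
Definition nu : R := rho_tr / (1 + rho_tr * Lbar).
Definition tau : R := 1 / (1 + kappa) + kappa / nu.
Definition Bc : R := Lbar * ((1 + kappa) / tau) + 1 / tau ^+ 2 * (kappa / (1 + kappa)).
Definition Ac : R :=
  (K%:R / N%:R * Lbar + 1 / (N%:R * rho)) * ((1 + kappa) / tau)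
  + K%:R / N%:R * (1 / tau ^+ 2) * (kappa / (1 + kappa)).

Definition closed1 : R :=
  1 / (1 / (nu * N%:R * rho) * ((1 + kappa) / tau)
       + K%:R / (N%:R * nu) * (Lbar * ((1 + kappa) / tau)
                               + 1 / tau ^+ 2 * (kappa / (1 + kappa)))
       + alpha / tau ^+ 2 * (Lbar - 1 / (1 + kappa))).

Definition closed2 : R :=
  1 / (Lbar / (N%:R * rho) * ((1 + kappa) / tau)
       + 1 / rho_tr * Ac
       + K%:R / N%:R * Lbar * Bc
       + alpha / tau ^+ 2 * (Lbar - 1 / (1 + kappa))).

End Closed.

(* Main.v *)
Require Import Defs.
From HB Require Import structures.
From mathcomp Require Import all_boot all_order all_algebra.
From mathcomp Require Import complex.
From mathcomp Require Import all_classical all_reals all_analysis.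
Import Order.TTheory GRing.Theory Num.Theory.
Local Open Scope ring_scope.
Local Open Scope complex_scope.
Local Open Scope classical_set_scope.
From mathcomp Require Import ring lra.
Import numFieldNormedType.Exports.

Lemma t2 (R : realType) (n:nat) (i0 : 'I_n) (c : R) : \sum_(i < n | i != i0) c = (n%:R - 1) * c.
Proof.
have h : \sum_(i<n) c = c + \sum_(i<n | i != i0) c by rewrite (bigD1 i0).
move: h; rewrite sumr_const card_ord => h.
by rewrite mulrBl mul1r mulr_natl h addrC addKr.
Qed.

Lemma keyl (R : realType) (P D E : R) : P != 0 -> D = P ^+ 2 * E -> P ^+ 2 / D = 1 / E.
Proof. by move=> hP ->; rewrite invfM mulrA divff ?expf_neq0. Qed.

Lemma keyl2 (R : realType) (P D E : R) : P != 0 -> D = P * E -> P^-1 * P ^+ 2 / D = 1 / E.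
Proof. move=> hP ->; rewrite expr2 invfM !mulrA mulVf // mul1r; by rewrite mul1r divff // ?mul1r ?div1r. Qed.

Lemma sumc (R : realType) (n : nat) (c : R) : \sum_(i < n) c = n%:R * c.
Proof. by rewrite sumr_const card_ord mulr_natl. Qed.

Section Alg.
Variable R : realType.
Variables (L N K : nat) (alpha kappa rho_tr rho : R).
Variable a : 'I_L -> 'I_K -> 'cV[R[i]]_N.
Hypotheses (L0 : (0 < L)%N) (K0 : (0 < K)%N) (al0 : 0 < alpha) (ka0 : 0 <= kappa)
  (rt0 : 0 < rho_tr) (r0 : 0 < rho) (N0 : (0 < N)%N).
Hypothesis Hort : forall j i k, ninner (hbar kappa a j i) (hbar kappa a j k)
   = (if i == k then kappa / (1 + kappa) else 0)%:C.

Notation Lb := (Lbar L alpha kappa).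
Notation nu := (nu L alpha kappa rho_tr).
Notation tau := (tau L alpha kappa rho_tr).

Lemma Nr0 : 0 < N%:R :> R. Proof. by rewrite ltr0n. Qed.
Lemma k1 : 0 < 1 + kappa. Proof. by rewrite -[0](addr0 0) ltr_leD. Qed.
Lemma Lb0 : 0 < Lb.
Proof.
rewrite /Lbar; have h1 : 0 <= L%:R - 1 :> R by rewrite subr_ge0 ler1n.
have := k1 => h; apply: ltr_wpDl; [exact: mulr_ge0 (ltW al0) h1| exact: divr_gt0 ltr01 h].
Qed.
Lemma q0 : 0 < 1 + rho_tr * Lb.
Proof. by rewrite addr_gt0 // mulr_gt0 // Lb0. Qed.
Lemma nu0 : 0 < nu.
Proof. by rewrite /Defs.nu divr_gt0 // q0. Qed.
Lemma tau0 : 0 < tau.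
Proof. rewrite /Defs.tau; have := nu0; have := k1 => h1 h2. 
apply: ltr_wpDr; [exact: divr_ge0 ka0 (ltW h2)| exact: divr_gt0 ltr01 h1]. Qed.

Lemma nn2 j k : nnorm2 (hbar kappa a j k) = kappa / (1 + kappa).
Proof. by rewrite /nnorm2 Hort eqxx. Qed.

Lemma sq0 j i k : i != k -> sqmod (ninner (hbar kappa a j i) (hbar kappa a j k)) = 0.
Proof. by move=> h; rewrite /sqmod Hort (negbTE h) /= expr0n /= addr0. Qed.

Lemma sq0' j i k : i != k -> sqmod (ninner (hbar kappa a j k) (hbar kappa a j i)) = 0.
Proof. by move=> h; rewrite /sqmod Hort eq_sym (negbTE h) /= expr0n /= addr0. Qed.

Lemma sumd j (k : 'I_K) : \sum_(n < L) dcoef alpha kappa j n k = Lb.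
Proof.
rewrite (bigD1 j) //= /dcoef eqxx.
under eq_bigr => n hn do rewrite eq_sym (negbTE hn).
by rewrite t2 /Lbar addrC mulrC.
Qed.

Lemma phijj (j : 'I_L) (k:'I_K) : phi alpha kappa rho_tr j j k = nu / (1+kappa)^+2.
Proof. rewrite /phi sumd /dcoef eqxx /Defs.nu. have := Lb0; have := k1 => h1 h2.
field. by rewrite ?(lt0r_neq0 k1) ?(lt0r_neq0 nu0) ?(lt0r_neq0 tau0) ?(lt0r_neq0 rt0) ?(lt0r_neq0 r0) ?(lt0r_neq0 q0) ?(lt0r_neq0 Nr0).
Qed.

Ltac nz := by rewrite ?(lt0r_neq0 k1) ?(lt0r_neq0 nu0) ?(lt0r_neq0 tau0) ?(lt0r_neq0 rt0) ?(lt0r_neq0 r0) ?(lt0r_neq0 q0) ?(lt0r_neq0 Nr0).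

Lemma phijl (j l : 'I_L) (k:'I_K) : l != j -> phi alpha kappa rho_tr j l k = alpha * nu / (1+kappa).
Proof. move=> h; rewrite /phi sumd /dcoef eqxx eq_sym (negbTE h) /Defs.nu. have := Lb0; have := k1 => h1 h2.
field. nz. Qed.

Lemma philj (j l : 'I_L) (k:'I_K) : l != j -> phi alpha kappa rho_tr l j k = alpha * nu / (1+kappa).
Proof. move=> h; rewrite /phi sumd /dcoef eqxx (negbTE h) /Defs.nu. have := Lb0; have := k1 => h1 h2.
field. nz. Qed.

Lemma hP : nu/(1+kappa)^+2 + kappa/(1+kappa) = nu*tau/(1+kappa).
Proof. rewrite /Defs.tau; field; nz. Qed.

Lemma th (l : 'I_L) : thetabar alpha kappa rho_tr a l = (1+kappa)/(nu*tau).
Proof.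
rewrite /thetabar.
under eq_bigr => i _ do rewrite phijj nn2 hP.
rewrite sumr_const card_ord -(mulr_natl (nu*tau/(1+kappa))) mulrAC divff ?mul1r ?invf_div //.
by rewrite pnatr_eq0 -lt0n.
Qed.

Definition Ef := 1/(nu*N%:R*rho)*((1+kappa)/tau) + K%:R/(N%:R*nu)*(Lb*((1+kappa)/tau))
  + (K%:R-1)/(N%:R*nu)*(1/tau^+2*(kappa/(1+kappa))) + alpha/tau^+2*(Lb - 1/(1+kappa)).

Lemma gMRC (j : 'I_L) (k : 'I_K) : gamma_MRC alpha kappa rho_tr a rho j k = 1 / Ef.
Proof.
rewrite /gamma_MRC /s_MRC th phijj nn2 hP.
have S3 : \sum_(i < K | i != k) sqmod (ninner (hbar kappa a j k) (hbar kappa a j i)) = 0.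
  by apply: big1 => i hi; exact: sq0'.
have S2 : \sum_(i < K | i != k) nu/(1+kappa)^+2 * nnorm2 (hbar kappa a j i)
   = (K%:R-1) * (nu/(1+kappa)^+2 * (kappa/(1+kappa))).
  by under eq_bigr => i _ do rewrite nn2; rewrite t2.
have S4 : \sum_(l < L | l != j) phi alpha kappa rho_tr j l k ^+ 2 = (L%:R - 1) * (alpha*nu/(1+kappa))^+2.
  by under eq_bigr => l hl do rewrite phijl //; rewrite t2.
rewrite S2 S3 S4 /dcoef.
under eq_bigr => l _ do rewrite sumc.
rewrite (bigD1 j) //= eqxx.
under eq_bigr => l hl do rewrite eq_sym (negbTE hl).
rewrite t2.
apply: keyl; first exact: lt0r_neq0 (divr_gt0 (mulr_gt0 nu0 tau0) k1).
rewrite /Ef /Lbar.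
field; nz.
Qed.

Lemma thf : thetabar alpha kappa rho_tr a = fun _ => (nu*tau/(1+kappa))^-1.
Proof. by apply: funext => l; rewrite th invf_div. Qed.

Lemma gMRT (j : 'I_L) (k : 'I_K) : gamma_MRT alpha kappa rho_tr a rho j k = 1 / Ef.
Proof.
rewrite /gamma_MRT /s_MRT thf /= phijj nn2 hP.
have S3 : \sum_(i < K | i != k) sqmod (ninner (hbar kappa a j i) (hbar kappa a j k)) = 0.
  by apply: big1 => i hi; exact: sq0.
have S2 : \sum_(i < K | i != k) (nu*tau/(1+kappa))^-1 * phi alpha kappa rho_tr j j i * (kappa/(1+kappa))
   = (K%:R-1) * ((nu*tau/(1+kappa))^-1 * (nu/(1+kappa)^+2) * (kappa/(1+kappa))).
  by under eq_bigr => i _ do rewrite phijj; rewrite t2.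
have S4 : \sum_(l < L | l != j) (nu*tau/(1+kappa))^-1 * phi alpha kappa rho_tr l j k ^+ 2
   = (L%:R - 1) * ((nu*tau/(1+kappa))^-1 * (alpha*nu/(1+kappa))^+2).
  by under eq_bigr => l hl do rewrite philj //; rewrite t2.
rewrite S2 S3 S4 /dcoef.
under eq_bigr => l _ do (under eq_bigr => i _ do rewrite phijj nn2 hP; rewrite sumc).
rewrite (bigD1 j) //= eqxx.
under eq_bigr => l hl do rewrite (negbTE hl).
rewrite t2.
apply: keyl2; first exact: lt0r_neq0 (divr_gt0 (mulr_gt0 nu0 tau0) k1).
rewrite /Ef /Lbar.
field; nz.
Qed.

Definition m0 := Lb*((1+kappa)/tau)/nu.
Definition cc := 1/nu * (1/tau^+2 * (kappa/(1+kappa))).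

Lemma m00 : 0 < m0.
Proof. by rewrite /m0 divr_gt0 ?nu0 // mulr_gt0 ?Lb0 // divr_gt0 ?k1 ?tau0. Qed.

Ltac leaf := first [ exact: (ltW nu0) | exact: (ltW tau0) | exact: (ltW k1) | exact: ka0
  | exact: (ltW al0) | exact: (ltW r0) | exact: (ltW rt0) | exact: ler0n
  | (rewrite subr_ge0 ler1n; done) | exact: (ltW Lb0) | exact: ler01 ].
Ltac pos := repeat (first [leaf | apply: mulr_ge0 | rewrite invr_ge0 | apply: exprn_ge0 | apply: addr_ge0]).

Lemma cc0 : 0 <= cc.
Proof. rewrite /cc; pos. Qed.

Lemma closedE : closed1 L N K alpha kappa rho_tr rho = 1 / (Ef + cc / N%:R).
Proof.
rewrite /closed1 /Ef /cc; congr (_ / _); field; nz.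
Qed.

Lemma Ebound : 0 < K%:R / N%:R * m0 /\ K%:R / N%:R * m0 <= Ef.
Proof.
split; first by rewrite mulr_gt0 ?m00 // divr_gt0 // ?ltr0n.
have t1 : 0 <= 1/(nu*N%:R*rho)*((1+kappa)/tau) by pos.
have t3 : 0 <= (K%:R-1)/(N%:R*nu)*(1/tau^+2*(kappa/(1+kappa))) by pos.
have t4 : 0 <= alpha/tau^+2*(Lb - 1/(1+kappa)) by rewrite /Lbar addrK; pos.
have t2 : K%:R/(N%:R*nu)*(Lb*((1+kappa)/tau)) = K%:R / N%:R * m0.
  rewrite /m0; field; nz.
rewrite /Ef t2.
move: t1 t3 t4; set u1 := 1/(nu*N%:R*rho)*((1+kappa)/tau).
set u3 := (K%:R-1)/(N%:R*nu)*(1/tau^+2*(kappa/(1+kappa))).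
set u4 := alpha/tau^+2*(Lb - 1/(1+kappa)).
set v := K%:R / N%:R * m0.
move=> *; lra.
Qed.
End Alg.




Lemma closed_eq (R : realType) (L N K : nat) (alpha kappa rho_tr rho : R) :
  (0 < L)%N -> 0 < alpha -> 0 <= kappa -> 0 < rho_tr -> 0 < rho ->
  closed1 L N K alpha kappa rho_tr rho = closed2 L N K alpha kappa rho_tr rho.
Proof.
move=> L0 al0 ka0 rt0 r0.
have ht := lt0r_neq0 (tau0 _ _ _ _ _ L0 al0 ka0 rt0).
have hq := lt0r_neq0 (q0 _ _ _ _ _ L0 al0 ka0 rt0).
have hk := lt0r_neq0 (k1 _ _ ka0).
rewrite /closed1 /closed2 /Ac /Bc; congr (_ / _).
move: (tau L alpha kappa rho_tr) ht => t ht.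
rewrite /nu.
case: (posnP N) => [->|hN].
  by rewrite !(mulr0, mul0r, invr0, addr0, add0r).
field.
by rewrite hk ht hq (lt0r_neq0 rt0) (lt0r_neq0 r0) pnatr_eq0 -lt0n hN.
Qed.

Lemma bnd (R : realType) (E d u : R) : 0 < E -> 0 <= d -> E^-1 <= u ->
  0 <= E^-1 - (E+d)^-1 <= d * u * u.
Proof.
move=> hE hd hu.
have hEd : 0 < E + d by rewrite ltr_wpDr.
have e : E^-1 - (E+d)^-1 = d * E^-1 * (E+d)^-1.
  by field; rewrite (lt0r_neq0 hE) (lt0r_neq0 hEd).
have hle : (E+d)^-1 <= E^-1 by rewrite lef_pV2 ?posrE // lerDl.
rewrite e; apply/andP; split.
  by rewrite !mulr_ge0 // invr_ge0 ltW.
apply: ler_pM; last exact: le_trans hle hu.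
- by rewrite mulr_ge0 // invr_ge0 ltW.
- by rewrite invr_ge0 ltW.
- by rewrite ler_wpM2l.
Qed.

Lemma lim_rho (R : realType) (L : nat) (alpha kappa rho_tr rho : R) (N K : nat -> nat) (G : nat -> R) :
  (0 < L)%N -> 0 < alpha -> 0 <= kappa -> 0 < rho_tr -> 0 < rho ->
  ((fun n => (N n)%:R : R) @ \oo --> +oo) ->
  (exists C : R, \forall n \near \oo, (N n)%:R / (K n)%:R <= C) ->
  (forall n, (0 < K n)%N) ->
  (forall n, (0 < N n)%N -> G n = 1 / Ef R L (N n) (K n) alpha kappa rho_tr rho) ->
  (fun n => G n - closed1 L (N n) (K n) alpha kappa rho_tr rho) @ \oo --> 0.
Proof.
move=> L0 al0 ka0 rt0 r0 HN [C HC] K0 HG.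
have HN0 : \forall n \near \oo, 0 < (N n)%:R :> R by move/cvgryPgt: HN; apply.
set m := m0 R L alpha kappa rho_tr.
set c := cc R L alpha kappa rho_tr.
set u := C / m.
have m0p : 0 < m := m00 _ _ _ _ _ L0 al0 ka0 rt0.
have c0 : 0 <= c := cc0 _ _ _ _ _ L0 al0 ka0 rt0.
apply: (squeeze_cvgr (f := fun _ => 0) (h := fun n => c / (N n)%:R * u * u)).
- near=> n.
  have hN : 0 < (N n)%:R :> R by near: n.
  have hC : (N n)%:R / (K n)%:R <= C by near: n.
  have hN' : (0 < N n)%N by rewrite -(ltr0n R).
  rewrite HG // (closedE _ _ _ _ _ _ _ _ L0 al0 ka0 rt0 r0 hN') !div1r.
  have [Ep Eb] := Ebound _ _ _ _ _ _ _ _ L0 (K0 n) al0 ka0 rt0 r0 hN'.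
  apply: bnd.
  + exact: lt_le_trans Ep Eb.
  + by rewrite divr_ge0 // ltW.
  + have h1 : (Ef R L (N n) (K n) alpha kappa rho_tr rho)^-1 <= ((K n)%:R / (N n)%:R * m)^-1.
      by rewrite lef_pV2 ?posrE //; exact: lt_le_trans Ep Eb.
    apply: le_trans h1 _.
    have -> : ((K n)%:R / (N n)%:R * m)^-1 = (N n)%:R / (K n)%:R / m.
      by field; rewrite (lt0r_neq0 m0p) (lt0r_neq0 hN) pnatr_eq0 -lt0n K0.
    by rewrite /u ler_wpM2r // invr_ge0 ltW.
- exact: cvg_cst.
- have hinv : (fun n => (N n)%:R^-1 : R) @ \oo --> 0.
    by apply/(gtr0_cvgV0 (f := fun n => (N n)%:R) HN0).
  have -> : (fun n => c / (N n)%:R * u * u) = (fun n => (c*u*u) * (N n)%:R^-1).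
    by apply: funext => n; ring.
  rewrite -[0](mulr0 (c*u*u)).
  exact: cvgMl_tmp hinv.
Unshelve. all: end_near.
Qed.
Theorem corollary5 (R : realType) (L : nat) (alpha kappa rho_tr rho_ul rho_dl : R)
    (N K : nat -> nat)
    (a : forall n : nat, 'I_L -> 'I_(K n) -> 'cV[R[i]]_(N n)) :
  (0 < L)%N ->
  0 < alpha -> alpha <= 1 -> 0 <= kappa ->
  0 < rho_tr -> 0 < rho_ul -> 0 < rho_dl ->
  ((fun n => (N n)%:R : R) @ \oo --> +oo) ->
  ((fun n => (K n)%:R : R) @ \oo --> +oo) ->
  (forall eps : R, 0 < eps ->
     \forall n \near \oo, 1 - eps <= (N n)%:R / (K n)%:R) ->
  (exists C : R, \forall n \near \oo, (N n)%:R / (K n)%:R <= C) ->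
  (forall n (j : 'I_L) (i k : 'I_(K n)),
     ninner (hbar kappa (a n) j i) (hbar kappa (a n) j k)
       = (if i == k then kappa / (1 + kappa) else 0)%:C) ->
  (forall n, closed1 L (N n) (K n) alpha kappa rho_tr rho_ul
             = closed2 L (N n) (K n) alpha kappa rho_tr rho_ul
          /\ closed1 L (N n) (K n) alpha kappa rho_tr rho_dl
             = closed2 L (N n) (K n) alpha kappa rho_tr rho_dl) /\
  (forall (j : 'I_L) (k : forall n, 'I_(K n)),
     ((fun n => gamma_MRC alpha kappa rho_tr (a n) rho_ul j (k n)
                - closed1 L (N n) (K n) alpha kappa rho_tr rho_ul) @ \oo --> 0)
  /\ ((fun n => gamma_MRT alpha kappa rho_tr (a n) rho_dl j (k n)
                - closed1 L (N n) (K n) alpha kappa rho_tr rho_dl) @ \oo --> 0)).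
Proof.
move=> L0 al0 al1 ka0 rt0 rul rdl HN HK Hlow HC Hort.
split.
  by move=> n; split; apply: closed_eq.
move=> j k.
have K0 : forall n, (0 < K n)%N.
  by move=> n; apply: (leq_ltn_trans (leq0n _) (ltn_ord (k n))).
split.
- apply: (lim_rho _ _ _ _ _ _ _ _ _ L0 al0 ka0 rt0 rul HN HC K0) => n hn.
  exact: (gMRC _ _ _ _ _ _ _ _ (a n) L0 (K0 n) al0 ka0 rt0 rul hn (Hort n)).
- apply: (lim_rho _ _ _ _ _ _ _ _ _ L0 al0 ka0 rt0 rdl HN HC K0) => n hn.
  exact: (gMRT _ _ _ _ _ _ _ _ (a n) L0 (K0 n) al0 ka0 rt0 rdl hn (Hort n)).
Qed.
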